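(* Let $R$ be a unital associative ring and $$A=\begin{pmatrix}1&1&1\\1&a&b\\1&c&d\end{pmatrix}\in\widehat{\cal S},\quad \Phi(A)=\begin{pmatrix}1&1&1\\1&a'&b'\\1&c'&d'\end{pmatrix},\quad \Phi^{-1}(A)=\begin{pmatrix}1&1&1\\1&a^\circ&b^\circ\\1&c^\circ&d^\circ\end{pmatrix}.$$ Then $$a'=(d-1)^{-1}(d-c)a^{-1}(db^{-1}-ca^{-1})^{-1}(db^{-1}-1),\qquad a^\circ=(d-1)(d-c)^{-1}(db^{-1}-ca^{-1})(db^{-1}-1)^{-1}.$$
   Context: $R^*$: units of $R$. $M_3^*(R)$: invertible $3\times3$ matrices; $M_3^\star(R)$: matrices with all entries in $R^*$. $J_1(M)=M^{-1}$ on $M_3^*(R)$; $J_2(M)_{jk}=(M_{kj})^{-1}$ on $M_3^\star(R)$; $J=J_2\circ J_1$, $J^{-1}=J_1\circ J_2$. $\widehat M_3(R)$: matrices whose first row and column consist of $1$'s. For $A=\{a_{j,k}\}\in M_3^\star(R)$: $\Lambda^L(A)_{j,k}=a_{1,1}a_{j,1}^{-1}a_{j,k}a_{1,k}^{-1}$, $\Lambda^R(A)_{j,k}=a_{j,1}^{-1}a_{j,k}a_{1,k}^{-1}a_{1,1}$. $\Phi(A)=J_2(\Lambda^L(A^{-1}))$ and $\Phi^{-1}(A)=\Lambda^R(J^{-1}(A))$ (both defined on $\widehat{\cal S}$). ${\cal S}=\{M\in M_3(R):$ all square submatrices of $M$ are invertible and $J_2(M)$ is invertible$\}$, $\widehat{\cal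 S}={\cal S}\cap\widehat M_3(R)$. *)

(* Defs.v *)
From mathcomp Require Import all_boot all_order all_algebra.
From Stdlib Require Import ClassicalEpsilon.
Set Implicit Arguments. Unset Strict Implicit. Unset Printing Implicit Defensive.
Import GRing.Theory.
Local Open Scope ring_scope.

Section Defs.
Variable R : unitRingType.

Definition mx_invertible (k : nat) (M : 'M[R]_k) : Prop :=
  exists N : 'M[R]_k, M *m N = 1%:M /\ N *m M = 1%:M.

(* the (two-sided) inverse, chosen by classical epsilon; it is unique when it exists *)
Definition ncinv (k : nat) (M : 'M[R]_k) : 'M[R]_k :=
  epsilon (inhabits M) (fun N : 'M[R]_k => M *m N = 1%:M /\ N *m M = 1%:M).

Definition J1 (M : 'M[R]_3) : 'M[R]_3 := ncinv M.
Definition J2 (M : 'M[R]_3) : 'M[R]_3 := \matrix_(j < 3, k < 3) (M k j)^-1.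
Definition J (M : 'M[R]_3) : 'M[R]_3 := J2 (J1 M).
Definition Jinv (M : 'M[R]_3) : 'M[R]_3 := J1 (J2 M).

Definition LambdaL (A : 'M[R]_3) : 'M[R]_3 :=
  \matrix_(j < 3, k < 3) (A 0 0 * (A j 0)^-1 * A j k * (A 0 k)^-1).
Definition LambdaR (A : 'M[R]_3) : 'M[R]_3 :=
  \matrix_(j < 3, k < 3) ((A j 0)^-1 * A j k * (A 0 k)^-1 * A 0 0).

Definition Phi (A : 'M[R]_3) : 'M[R]_3 := J2 (LambdaL (J1 A)).
Definition PhiInv (A : 'M[R]_3) : 'M[R]_3 := LambdaR (Jinv A).

(* square submatrices: choose k rows and k columns (in increasing order) *)
Definition in_S (M : 'M[R]_3) : Prop :=
  (forall (k : nat) (f g : 'I_k -> 'I_3),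
      {homo f : x y / (x < y)%N} -> {homo g : x y / (x < y)%N} ->
      mx_invertible (mxsub f g M))
  /\ mx_invertible (J2 M).

Definition in_hatM (M : 'M[R]_3) : Prop := forall i : 'I_3, M 0 i = 1 /\ M i 0 = 1.

Definition in_hatS (M : 'M[R]_3) : Prop := in_S M /\ in_hatM M.

(* the matrix [[1,1,1],[1,a,b],[1,c,d]] *)
Definition hatmx (a b c d : R) : 'M[R]_3 :=
  \matrix_(i < 3, j < 3)
    (if (i == 0 :> nat) || (j == 0 :> nat) then 1
     else if (i == 1 :> nat) then (if (j == 1 :> nat) then a else b)
     else (if (j == 1 :> nat) then c else d)).
End Defs.

Definition i1 : 'I_3 := inord 1.

(* Main.v *)
Require Import Defs.
From mathcomp Require Import all_boot all_order all_algebra.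
From Stdlib Require Ncring Ncring_tac.
Import GRing.Theory.
Local Open Scope ring_scope.

Definition i2 : 'I_3 := inord 2.

Lemma mul3 (R : unitRingType) (M N : 'M[R]_3) i j :
  (M *m N) i j = M i 0 * N 0 j + M i i1 * N i1 j + M i i2 * N i2 j.
Proof.
rewrite mxE !big_ord_recl big_ord0 addr0 addrA.
have -> : lift ord0 (@ord0 1) = i1 by apply: val_inj; rewrite /= inordK.
have -> : lift ord0 (lift ord0 (@ord0 0)) = i2 by apply: val_inj; rewrite /= inordK.
by [].
Qed.

Lemma hat00 (R : unitRingType) (a b c d : R) : hatmx a b c d 0 0 = 1.
Proof. by rewrite mxE /i1 /i2 ?inordK. Qed.
Lemma hat01 (R : unitRingType) (a b c d : R) : hatmx a b c d 0 i1 = 1.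
Proof. by rewrite mxE /i1 /i2 ?inordK. Qed.
Lemma hat02 (R : unitRingType) (a b c d : R) : hatmx a b c d 0 i2 = 1.
Proof. by rewrite mxE /i1 /i2 ?inordK. Qed.
Lemma hat10 (R : unitRingType) (a b c d : R) : hatmx a b c d i1 0 = 1.
Proof. by rewrite mxE /i1 /i2 ?inordK. Qed.
Lemma hat20 (R : unitRingType) (a b c d : R) : hatmx a b c d i2 0 = 1.
Proof. by rewrite mxE /i1 /i2 ?inordK. Qed.
Lemma hat11 (R : unitRingType) (a b c d : R) : hatmx a b c d i1 i1 = a.
Proof. by rewrite mxE /i1 /i2 ?inordK. Qed.
Lemma hat12 (R : unitRingType) (a b c d : R) : hatmx a b c d i1 i2 = b.
Proof. by rewrite mxE /i1 /i2 ?inordK. Qed.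
Lemma hat21 (R : unitRingType) (a b c d : R) : hatmx a b c d i2 i1 = c.
Proof. by rewrite mxE /i1 /i2 ?inordK. Qed.
Lemma hat22 (R : unitRingType) (a b c d : R) : hatmx a b c d i2 i2 = d.
Proof. by rewrite mxE /i1 /i2 ?inordK. Qed.
Lemma id3 (R : unitRingType) (i j : 'I_3) : (1%:M : 'M[R]_3) i j = (i == j)%:R.
Proof. by rewrite mxE /i1 /i2 ?inordK. Qed.
Lemma idE (R : unitRingType) (i j : 'I_3) : (1%:M : 'M[R]_3) i j = ((i : nat) == j)%:R.
Proof. by rewrite mxE. Qed.
Lemma v1 : (i1 : nat) = 1%N. Proof. by rewrite /i1 inordK. Qed.
Lemma v2 : (i2 : nat) = 2%N. Proof. by rewrite /i2 inordK. Qed.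

Section Gen.
Variable R : unitRingType.
#[local] Instance R_ops : @Ncring.Ring_ops R 0 1 +%R *%R (fun x y => x - y) -%R eq := {}.
#[local] Instance R_ring : Ncring.Ring (Ro:=R_ops).
Proof.
constructor; cbv delta [Ncring.zero_notation Ncring.one_notation Ncring.add_notation Ncring.mul_notation Ncring.sub_notation Ncring.opp_notation Ncring.eq_notation Algebra_syntax.zero Algebra_syntax.one Algebra_syntax.addition Algebra_syntax.multiplication Algebra_syntax.subtraction Algebra_syntax.opposite Algebra_syntax.equality] beta;
 try exact: RelationClasses.eq_equivalence; try (by move=> ? ? -> ? ? ->);
 try (by move=> ? ? ->).
- exact: add0r.
- exact: addrC.
- exact: addrA.
- exact: mul1r.
- exact: mulr1.
- exact: mulrA.
- exact: mulrDl.
- move=> x y z; exact: mulrDr.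
- by [].
- exact: subrr.
Qed.

Ltac ncr := Ncring_tac.non_commutative_ring.

Lemma lin (X Y Z : R) : X - Y = Z -> Z = 0 -> X = Y.
Proof. by move=> h z; apply/eqP; rewrite -subr_eq0 h z. Qed.
Lemma solveL (u x y : R) : u \is a GRing.unit -> u * x = y -> x = u^-1 * y.
Proof. by move=> uu <-; rewrite mulKr. Qed.
Lemma solveR (u x y : R) : u \is a GRing.unit -> x * u = y -> x = y * u^-1.
Proof. by move=> uu <-; rewrite mulrK. Qed.
Lemma unitLR (x y z : R) : y * x = 1 -> x * z = 1 -> x \is a GRing.unit.
Proof.
move=> yx xz; apply/unitrP; exists y; split=> //.
have -> : y = z by rewrite -[y]mulr1 -xz mulrA yx mul1r.
done.
Qed.

Lemma gen (a b c d : R) (B : 'M[R]_3) :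
  hatmx a b c d *m B = 1%:M -> B *m hatmx a b c d = 1%:M ->
  a \is a GRing.unit -> b \is a GRing.unit -> d \is a GRing.unit ->
  (1 - d) \is a GRing.unit ->
  (c - d * b^-1 * a) \is a GRing.unit -> (a - b * d^-1 * c) \is a GRing.unit ->
  B 0 0 \is a GRing.unit /\ B i1 i1 \is a GRing.unit /\
      B 0 i1 = (1 - d)^-1 * (d - c) * B i1 i1 /\
      B i1 0 = (c - d * b^-1 * a)^-1 * (d * b^-1 - 1) * B 0 0 /\
      B i1 0 = B i1 i1 * ((d - b) * (1 - d)^-1) /\
      B 0 i1 = B 0 0 * ((d^-1 * c - 1) * (a - b * d^-1 * c)^-1).
Proof.
move=> MB BM ua ub ud u1d uK uL.
have e := fun i j => congr1 (fun X : 'M[R]_3 => X i j) MB.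
have f := fun i j => congr1 (fun X : 'M[R]_3 => X i j) BM.
have C00 := e 0 0; have C10 := e i1 0; have C20 := e i2 0.
have C01 := e 0 i1; have C11 := e i1 i1; have C21 := e i2 i1.
have R00 := f 0 0; have R01 := f 0 i1; have R02 := f 0 i2.
have R10 := f i1 0; have R11 := f i1 i1; have R12 := f i1 i2.
rewrite /= !mul3 !idE ?v1 ?v2 /= ?hat00 ?hat01 ?hat02 ?hat10 ?hat11 ?hat12 ?hat20 ?hat21 ?hat22 ?mul1r ?mulr1 in C00 C10 C20 C01 C11 C21 R00 R01 R02 R10 R11 R12.
move: (B 0 0) (B i1 0) (B i2 0) (B 0 i1) (B i1 i1) (B i2 i1) (B 0 i2) (B i1 i2) C00 C10 C20 C01 C11 C21 R00 R01 R02 R10 R11 R12 => x00 x10 x20 x01 x11 x21 x02 x12 C00 C10 C20 C01 C11 C21 R00 R01 R02 R10 R11 R12.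

set K := c - d / b * a; set L := a - b / d * c.
have h10 : x10 = K^-1 * (d / b - 1) * x00.
  rewrite -mulrA; apply: solveL => //.
  apply: (@lin _ _ ((x00 + c * x10 + d * x20) - d / b * (x00 + a * x10 + b * x20) + d * (b^-1 * b - 1) * x20)).
    rewrite /K; ncr.
  by rewrite C20 C10 mulVr // subrr; ncr.
have h20 : x20 = - b^-1 * (x00 + a * x10).
  rewrite mulNr -mulrN; apply: solveL => //.
  apply: (@lin _ _ (x00 + a * x10 + b * x20)); first ncr.
  exact: C10.
have h01 : x01 = x00 * ((d^-1 * c - 1) / L).
  rewrite mulrA. apply: (@solveR L) => //.
  apply: (@lin _ _ ((x00 + x01 * a + x02 * c) - (x00 + x01 * b + x02 * d) * d^-1 * c + x02 * (d * d^-1 - 1) * c)).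
    rewrite /L; ncr.
  by rewrite R01 R02 mulrV // subrr; ncr.
have h02 : x02 = - (x00 + x01 * b) * d^-1.
  apply: solveR => //.
  apply: (@lin _ _ (x00 + x01 * b + x02 * d)); first ncr.
  exact: R02.
have h01b : x01 = (1 - d)^-1 * (d - c) * x11.
  rewrite -mulrA; apply: solveL => //.
  apply: (@lin _ _ ((x01 + c * x11 + d * x21) - d * (x01 + x11 + x21))); first ncr.
  by rewrite C21 C01; ncr.
have h21 : x21 = - (x01 + x11).
  apply: (@lin _ _ (x01 + x11 + x21)); first ncr.
  exact: C01.
have h10b : x10 = x11 * ((d - b) / (1 - d)).
  rewrite mulrA; apply: solveR => //.
  apply: (@lin _ _ ((x10 + x11 * b + x12 * d) - (x10 + x11 + x12) * d)); first ncr.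
  by rewrite R12 R10; ncr.
have h12 : x12 = - (x10 + x11).
  apply: (@lin _ _ (x10 + x11 + x12)); first ncr.
  exact: R10.
split.
  apply: (@unitLR _ (1 + K^-1 * (d / b - 1) - b^-1 * (1 + a * (K^-1 * (d / b - 1))))
                   (1 + ((d^-1 * c - 1) / L) - (1 + ((d^-1 * c - 1) / L) * b) * d^-1)).
    by apply: (etrans _ C00); rewrite h20 h10; ncr.
  by apply: (etrans _ R00); rewrite h02 h01; ncr.
split.
  apply: (@unitLR _ ((1 - d)^-1 * (d - c) + a - b * ((1 - d)^-1 * (d - c) + 1))
                   (((d - b) / (1 - d)) + a - (((d - b) / (1 - d)) + 1) * c)).
    by apply: (etrans _ C11); rewrite h21 h01b; ncr.
  by apply: (etrans _ R11); rewrite h12 h10b; ncr.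
by [].
Qed.


Definition j1 : 'I_2 := Ordinal (isT : (1 < 2)%N).

Lemma mul2 (M N : 'M[R]_2) i j :
  (M *m N) i j = M i 0 * N 0 j + M i j1 * N j1 j.
Proof.
rewrite mxE !big_ord_recl big_ord0 addr0.
by have -> : lift ord0 (@ord0 0) = j1 by apply: val_inj.
Qed.

Lemma inv_ex k (M : 'M[R]_k) : mx_invertible M ->
  M *m ncinv M = 1%:M /\ ncinv M *m M = 1%:M.
Proof. by move=> [N hN]; rewrite /ncinv; apply: (ClassicalEpsilon.epsilon_spec (inhabits M) (fun N : 'M[R]_k => M *m N = 1%:M /\ N *m M = 1%:M)); exists N. Qed.

Lemma minor1 (M : 'M[R]_1) : mx_invertible M -> M 0 0 \is a GRing.unit.
Proof.
move=> [N [MN NM]].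
have e1 := congr1 (fun X : 'M[R]_1 => X 0 0) MN.
have e2 := congr1 (fun X : 'M[R]_1 => X 0 0) NM.
rewrite /= !mxE !big_ord1 /= in e1 e2.
have h0 : (0 : 'I_1) = ord0 by apply: val_inj. rewrite ?h0 in e1 e2 *. exact: (@unitLR _ _ _ e2 e1).
Qed.


Lemma minorA (M : 'M[R]_2) : mx_invertible M -> M 0 0 = 1 -> M 0 j1 = 1 ->
  M j1 j1 - M j1 0 \is a GRing.unit.
Proof.
move=> [N [MN NM]] h00 h01.
have e := fun i j => congr1 (fun X : 'M[R]_2 => X i j) MN.
have f := fun i j => congr1 (fun X : 'M[R]_2 => X i j) NM.
have A00 := e 0 0; have A01 := e 0 j1; have A10 := e j1 0; have A11 := e j1 j1.
have B00 := f 0 0; have B01 := f 0 j1; have B10 := f j1 0; have B11 := f j1 j1.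
rewrite /= !mul2 !mxE /= in A00 A01 A10 A11 B00 B01 B10 B11.
clear e f.
rewrite h00 h01 ?mul1r ?mulr1 in A00 A01 A10 A11 B00 B01 B10 B11.
apply: (@unitLR _ (- N 0 j1) (- N 0 j1)).
  apply: (@lin _ _ ((N 0 0 + N 0 j1 * M j1 0 - 1) - (N 0 0 + N 0 j1 * M j1 j1))); first ncr.
  by rewrite B00 B01 subrr; ncr.
apply: (@lin _ _ ((M j1 0 * N 0 j1 + M j1 j1 * N j1 j1 - 1) - M j1 j1 * (N 0 j1 + N j1 j1))); first ncr.
by rewrite A11 A01 subrr; ncr.
Qed.

Lemma minorB (M : 'M[R]_2) : mx_invertible M -> M 0 0 = 1 -> M j1 0 = 1 ->
  M j1 j1 - M 0 j1 \is a GRing.unit.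
Proof.
move=> [N [MN NM]] h00 h10.
have e := fun i j => congr1 (fun X : 'M[R]_2 => X i j) MN.
have f := fun i j => congr1 (fun X : 'M[R]_2 => X i j) NM.
have A00 := e 0 0; have A01 := e 0 j1; have A10 := e j1 0; have A11 := e j1 j1.
have B00 := f 0 0; have B01 := f 0 j1; have B10 := f j1 0; have B11 := f j1 j1.
rewrite /= !mul2 !mxE /= in A00 A01 A10 A11 B00 B01 B10 B11.
clear e f.
rewrite h00 h10 ?mul1r ?mulr1 in A00 A01 A10 A11 B00 B01 B10 B11.
apply: (@unitLR _ (- N j1 0) (- N j1 0)).
  apply: (@lin _ _ ((N j1 0 * M 0 j1 + N j1 j1 * M j1 j1 - 1) - (N j1 0 + N j1 j1) * M j1 j1)); first ncr.
  by rewrite B11 B10 subrr; ncr.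
apply: (@lin _ _ ((N 0 0 + M 0 j1 * N j1 0 - 1) - (N 0 0 + M j1 j1 * N j1 0))); first ncr.
by rewrite A00 A10 subrr; ncr.
Qed.

Lemma minorC (M : 'M[R]_2) : mx_invertible M -> M 0 j1 \is a GRing.unit ->
  M j1 0 - M j1 j1 * (M 0 j1)^-1 * M 0 0 \is a GRing.unit.
Proof.
move=> [N [MN NM]] uq.
have e := fun i j => congr1 (fun X : 'M[R]_2 => X i j) MN.
have f := fun i j => congr1 (fun X : 'M[R]_2 => X i j) NM.
have A00 := e 0 0; have A01 := e 0 j1; have A10 := e j1 0; have A11 := e j1 j1.
have B00 := f 0 0; have B01 := f 0 j1; have B10 := f j1 0; have B11 := f j1 j1.
rewrite /= !mul2 !mxE /= in A00 A01 A10 A11 B00 B01 B10 B11.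
clear e f.
move: (M 0 0) (M 0 j1) (M j1 0) (M j1 j1) uq A00 A01 A10 A11 B00 B01 B10 B11 => p q r s uq A00 A01 A10 A11 B00 B01 B10 B11.
apply: (@unitLR _ (N 0 j1) (N 0 j1)).
  apply: (@lin _ _ ((N 0 0 * p + N 0 j1 * r - 1) - (N 0 0 * q + N 0 j1 * s) * q^-1 * p + N 0 0 * (q * q^-1 - 1) * p)); first ncr.
  by rewrite B00 B01 mulrV // subrr; ncr.
apply: (@lin _ _ ((r * N 0 j1 + s * N j1 j1 - 1) - s * q^-1 * (p * N 0 j1 + q * N j1 j1) + s * (q^-1 * q - 1) * N j1 j1)); first ncr.
by rewrite A11 A01 mulVr // subrr; ncr.
Qed.

Lemma umul (x y : R) : x \is a GRing.unit -> y \is a GRing.unit -> x * y \is a GRing.unit.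
Proof. by move=> ux uy; rewrite unitrMl. Qed.

Lemma invE (x y : R) : x \is a GRing.unit -> y * x = 1 -> x^-1 = y.
Proof. by move=> ux yx; rewrite -[LHS]mul1r -yx mulrK. Qed.

Lemma J2hat (a b c d : R) : J2 (hatmx a b c d) = hatmx a^-1 c^-1 b^-1 d^-1.
Proof.
apply/matrixP=> i j; rewrite !mxE.
by case: i => [[|[|[|?]]] ?]; case: j => [[|[|[|?]]] ?] //=; rewrite invr1.
Qed.

Definition f1 (r : 'I_3) : 'I_1 -> 'I_3 := fun _ => r.
Lemma homo1 (r : 'I_3) : {homo f1 r : x y / (x < y)%N}.
Proof. by move=> [[|?] ?] [[|?] ?]. Qed.
Definition f2 (r0 r1 : 'I_3) : 'I_2 -> 'I_3 := fun i => if (i : nat) == 0%N then r0 else r1.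
Lemma homo2 (r0 r1 : 'I_3) : (r0 < r1)%N -> {homo f2 r0 r1 : x y / (x < y)%N}.
Proof. by move=> h [[|[|?]] ?] [[|[|?]] ?]. Qed.

Lemma ltn01 : (((0%R : 'I_3) : nat) < i1)%N. Proof. by rewrite v1. Qed.
Lemma ltn02 : (((0%R : 'I_3) : nat) < i2)%N. Proof. by rewrite v2. Qed.
Lemma ltn12 : (i1 < i2)%N. Proof. by rewrite v1 v2. Qed.

Lemma main_gen (a b c d : R) :
  in_hatS (hatmx a b c d) ->
  Phi (hatmx a b c d) i1 i1
    = (d - 1)^-1 * (d - c) * a^-1 * (d * b^-1 - c * a^-1)^-1 * (d * b^-1 - 1)
  /\ PhiInv (hatmx a b c d) i1 i1
    = (d - 1) * (d - c)^-1 * (d * b^-1 - c * a^-1) * (d * b^-1 - 1)^-1.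
Proof.
move=> [[hS hJ] _].
have u1x r s : mx_invertible (mxsub (f1 r) (f1 s) (hatmx a b c d)) by apply: hS; apply: homo1.
have ua : a \is a GRing.unit by have := minor1 _ (u1x i1 i1); rewrite mxE /f1 /= hat11.
have ub : b \is a GRing.unit by have := minor1 _ (u1x i1 i2); rewrite mxE /f1 /= hat12.
have uc : c \is a GRing.unit by have := minor1 _ (u1x i2 i1); rewrite mxE /f1 /= hat21.
have ud : d \is a GRing.unit by have := minor1 _ (u1x i2 i2); rewrite mxE /f1 /= hat22.
have u2x (r0 r1 s0 s1 : 'I_3) : (r0 < r1)%N -> (s0 < s1)%N ->
    mx_invertible (mxsub (f2 r0 r1) (f2 s0 s1) (hatmx a b c d)).
  by move=> h1 h2; apply: hS; apply: homo2.
have ud1 : d - 1 \is a GRing.unit.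
  have := minorA _ (u2x _ _ _ _ ltn02 ltn02); rewrite !mxE /f2 /= ?v1 ?v2 /=; exact.
have udc : d - c \is a GRing.unit.
  have := minorA _ (u2x _ _ _ _ ltn02 ltn12); rewrite !mxE /f2 /= ?v1 ?v2 /=; exact.
have udb : d - b \is a GRing.unit.
  have := minorB _ (u2x _ _ _ _ ltn12 ltn02); rewrite !mxE /f2 /= ?v1 ?v2 /=; exact.
have uK : c - d * b^-1 * a \is a GRing.unit.
  have := minorC _ (u2x _ _ _ _ ltn12 ltn12); rewrite !mxE /f2 /= ?v1 ?v2 /=; exact.
have uM : mx_invertible (hatmx a b c d).
  have := hS _ id id (fun x y h => h) (fun x y h => h); by rewrite mxsub_id.
set K := c - d / b * a.
set Q := d / b - c / a.
set L := a - b / d * c.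
have u1md : 1 - d \is a GRing.unit.
  have -> : 1 - d = - (d - 1) by ncr.
  by rewrite unitrN.
have hK : K = - (Q * a).
  apply: (@lin _ _ (c * (1 - a^-1 * a))); first by rewrite /K /Q; ncr.
  by rewrite mulVr // subrr; ncr.
have hQ : Q = - (K * a^-1).
  apply: (@lin _ _ (d * b^-1 * (1 - a * a^-1))); first by rewrite /K /Q; ncr.
  by rewrite mulrV // subrr; ncr.
have uQ : Q \is a GRing.unit by rewrite hQ unitrN; repeat apply: umul; rewrite ?unitrV.
have hL : L = - (b * d^-1 * K).
  apply: (@lin _ _ ((1 - b * b^-1) * a + b * (1 - d^-1 * d) * b^-1 * a)); first by rewrite /K /L; ncr.
  by rewrite mulrV // mulVr // !subrr; ncr.
have uL : L \is a GRing.unit by rewrite hL unitrN; repeat apply: umul; rewrite ?unitrV.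
have udb1 : d / b - 1 \is a GRing.unit.
  have -> : d / b - 1 = (d - b) / b.
    apply: (@lin _ _ (b * b^-1 - 1)); first ncr.
    by rewrite mulrV // subrr.
  by repeat apply: umul; rewrite ?unitrV.
split.
  have [MB BM] := inv_ex _ _ uM.
  have [uB00 [uB11 [hB01 [hB10 _]]]] := gen _ _ _ _ _ MB BM ua ub ud u1md uK uL.
  rewrite /Phi /J2 /LambdaL /J1 !mxE hB10 hB01.
  have ut : K^-1 * (d / b - 1) \is a GRing.unit by repeat apply: umul; rewrite ?unitrV.
  have uu1 : (1 - d)^-1 * (d - c) \is a GRing.unit by repeat apply: umul; rewrite ?unitrV.
  rewrite (invrM ut uB00) (invrM uu1 uB11) !mulrA (mulrV uB00) mul1r (mulrK uB11).
  rewrite invrM ?unitrV // !invrK.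
  rewrite (_ : 1 - d = - (d - 1)); last ncr.
  rewrite invrN hK invrN invrM //; ncr.
rewrite J2hat in hJ.
have [MC CM] := inv_ex _ _ hJ.
have uai : a^-1 \is a GRing.unit by rewrite unitrV.
have uci : c^-1 \is a GRing.unit by rewrite unitrV.
have udi : d^-1 \is a GRing.unit by rewrite unitrV.
have u1di : 1 - d^-1 \is a GRing.unit.
  have -> : 1 - d^-1 = - ((1 - d) * d^-1).
    apply: (@lin _ _ (1 - d * d^-1)); first ncr.
    by rewrite mulrV // subrr.
  by rewrite unitrN; repeat apply: umul; rewrite ?unitrV.
have hK' : b^-1 - d^-1 * c^-1^-1 * a^-1 = d^-1 * Q.
  rewrite invrK; apply: (@lin _ _ ((1 - d^-1 * d) * b^-1)); first by rewrite /Q; ncr.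
  by rewrite mulVr // subrr; ncr.
have uK' : b^-1 - d^-1 * c^-1^-1 * a^-1 \is a GRing.unit.
  by rewrite hK'; apply: umul.
have hL' : a^-1 - c^-1 * d^-1^-1 * b^-1 = - (c^-1 * Q).
  rewrite invrK; apply: (@lin _ _ ((1 - c^-1 * c) * a^-1)); first by rewrite /Q; ncr.
  by rewrite mulVr // subrr; ncr.
have uL' : a^-1 - c^-1 * d^-1^-1 * b^-1 \is a GRing.unit.
  by rewrite hL' unitrN; apply: umul.
have [uC00 [uC11 [_ [_ [hC10 hC01]]]]] := gen _ _ _ _ _ MC CM uai uci udi u1di uK' uL'.
rewrite /PhiInv /Jinv J2hat /J1 /LambdaR mxE hC10 hC01.
set U := (d^-1 - c^-1) / (1 - d^-1).
set W := (d^-1^-1 * b^-1 - 1) / (a^-1 - c^-1 * d^-1^-1 * b^-1).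
have udc' : d^-1 - c^-1 \is a GRing.unit.
  have -> : d^-1 - c^-1 = c^-1 * (- (d - c)) * d^-1.
    apply: (@lin _ _ (c^-1 * (d * d^-1 - 1) - (c^-1 * c - 1) * d^-1)); first ncr.
    by rewrite mulrV // mulVr // !subrr; ncr.
  by repeat apply: umul; rewrite ?unitrV ?unitrN.
have uU : U \is a GRing.unit by repeat apply: umul; rewrite ?unitrV.
have uW : W \is a GRing.unit by apply: umul; rewrite ?unitrV // invrK.
rewrite (invrM uC11 uU) (invrM uC00 uW) (mulrVK uC11) mulrA (mulrVK uC00).
rewrite -invrM //; apply: invE; first exact: umul.
rewrite /W /U hL' invrN (invrM uci uQ) !invrK.
set Y := (d - c)^-1. set X := (d / b - 1)^-1. set Z' := (1 - d^-1)^-1.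
apply: (@lin _ _ (((1 - d^-1) * Z' - 1) + (d * d^-1 - 1) * Z' + (d - 1) * (Y * (d - c) - 1) * d^-1 * Z'
   - (d - 1) * Y * (d * d^-1 - 1) * Z' - (d - 1) * Y * (1 - c * c^-1) * Z'
   - (d - 1) * Y * (Q * Q^-1 - 1) * c * (d^-1 - c^-1) * Z'
   - (d - 1) * Y * Q * (X * (d / b - 1) - 1) * Q^-1 * c * (d^-1 - c^-1) * Z')).
  ncr.
by rewrite /Y /X /Z' (mulrV u1di) (mulrV ud) (mulVr udc) (mulrV uc) (mulrV uQ) (mulVr udb1) !subrr; ncr.
Qed.

End Gen.

Theorem lemma9 (R : unitRingType) (a b c d : R) :
  in_hatS (hatmx a b c d) ->
  Phi (hatmx a b c d) i1 i1
    = (d - 1)^-1 * (d - c) * a^-1 * (d * b^-1 - c * a^-1)^-1 * (d * b^-1 - 1)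
  /\ PhiInv (hatmx a b c d) i1 i1
    = (d - 1) * (d - c)^-1 * (d * b^-1 - c * a^-1) * (d * b^-1 - 1)^-1.
Proof. exact: main_gen. Qed.
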